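(* For every $n\geq 2$, letting $P_n$ denote the path with $n$ edges (and $n+1$ vertices), ${\rm ML}^{\rm W}(P_n)=0$ if $n=2$; ${\rm ML}^{\rm W}(P_n)=1$ if $n=3$; ${\rm ML}^{\rm W}(P_n)=2$ if $n\in\{4,5\}$; and ${\rm ML}^{\rm W}(P_n)=2n-10$ otherwise.
   Context: A walk of a graph $G$ is a sequence of vertices $u_0u_1\dots u_p$ with $u_tu_{t+1}\in E(G)$ for all $t$ (vertices and edges may repeat); its length is $p$. For a walk $W$ of $G$, $G+W$ is the multigraph on $V(G)$ whose edge multiset consists of $E(G)$ together with each edge added as many times as $W$ traverses it. A multigraph is locally irregular if no two adjacent vertices have the same degree; a walk is irregularising if $G+W$ is locally irregular. ${\rm ML}^{\rm W}(G)$ denotes the minimum length of an irregularising walk of $G$, where the trivial walk consisting of a single vertex (length $0$) is allowed. *)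

(* Defs.v *)
From mathcomp Require Import all_boot.
Set Implicit Arguments. Unset Strict Implicit. Unset Printing Implicit Defensive.

(* A simple graph: symmetric irreflexive relation e on a finite vertex type T. *)

Definition gdeg (T : finType) (e : rel T) (v : T) : nat := #|[set w | e v w]|.

(* A walk u_0 u_1 ... u_p is represented by its first vertex x = u_0 and the
   sequence s = [:: u_1; ...; u_p]; its length is size s. *)
Definition is_walk (T : finType) (e : rel T) (x : T) (s : seq T) : bool :=
  path e x s.

Definition walk_length (T : finType) (x : T) (s : seq T) : nat := size s.

(* Number of edge-ends at v added by the walk: each traversal of an edge ab
   adds one copy of ab, contributing 1 to the degree of a and 1 to that of b. *)
Definition walk_extra_deg (T : finType) (x : T) (s : seq T) (v : T) : nat :=
  \sum_(p <- zip (x :: s) s) ((p.1 == v) + (p.2 == v)).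

Definition plus_walk_deg (T : finType) (e : rel T) (x : T) (s : seq T) (v : T)
  : nat := gdeg e v + walk_extra_deg x s v.

(* G + W is locally irregular (adjacency in G+W equals adjacency in G). *)
Definition irregularising (T : finType) (e : rel T) (x : T) (s : seq T) : Prop :=
  is_walk e x s /\
  forall u v : T, e u v -> plus_walk_deg e x s u <> plus_walk_deg e x s v.

Definition MLW_eq (T : finType) (e : rel T) (m : nat) : Prop :=
  (exists (x : T) (s : seq T), irregularising e x s /\ walk_length x s = m) /\
  (forall (x : T) (s : seq T), irregularising e x s -> m <= walk_length x s).

Definition path_rel (n : nat) : rel 'I_n.+1 :=
  fun i j => (i.+1 == j :> nat) || (j.+1 == i :> nat).

(* Main.v *)
Require Import Defs.
From mathcomp Require Import all_boot.
From mathcomp Require Import zify.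
Set Implicit Arguments. Unset Strict Implicit. Unset Printing Implicit Defensive.

Definition adj (a b : nat) : bool := (a.+1 == b) || (b.+1 == a).
Definition ec (c a b : nat) : bool := ((a == c) && (b == c.+1)) || ((a == c.+1) && (b == c)).
Fixpoint cr (c a : nat) (s : seq nat) : nat :=
  if s is b :: s' then ec c a b + cr c b s' else 0.
Fixpoint ed (a : nat) (s : seq nat) (v : nat) : nat :=
  if s is b :: s' then (a == v) + (b == v) + ed b s' v else 0.
Fixpoint sumf (f : nat -> nat) (i k : nat) : nat :=
  if k is k'.+1 then f i + sumf f i.+1 k' else 0.

Ltac eqs := repeat match goal with |- context [?x == ?y :> nat] => case: (x =P y) => ? end.

Lemma ec_up c a : ec c a a.+1 = (a == c).
Proof. rewrite /ec; eqs => //=; lia. Qed.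
Lemma ec_down c a : ec c a.+1 a = (a == c).
Proof. rewrite /ec; eqs => //=; lia. Qed.

Lemma ec_le c a b : adj a b -> ec c a b = ((a <= c) != (b <= c)).
Proof.
case/orP=> /eqP <-; rewrite ?ec_up ?ec_down.
  by case: (ltngtP a c).
by case: (ltngtP b c).
Qed.

Lemma sumfD f g i k : sumf (fun c => f c + g c) i k = sumf f i k + sumf g i k.
Proof. elim: k i => [|k IH] i //=; rewrite IH; lia. Qed.
Lemma sumf0 i k : sumf (fun _ => 0) i k = 0.
Proof. elim: k i => [|k IH] i //=; by rewrite IH. Qed.
Lemma sumf_ext f g i k : (forall c, f c = g c) -> sumf f i k = sumf g i k.
Proof. move=> h; elim: k i => [|k IH] i //=; by rewrite IH h. Qed.
Lemma sumf_shift f i k : sumf f i.+1 k = sumf (fun l => f l.+1) i k.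
Proof. elim: k i => [|k IH] i //=; by rewrite IH. Qed.
Lemma sumf_le1 g t i k : (forall c, g c <= (c == t)) -> sumf g i k <= (i <= t).
Proof.
move=> h; elim: k i => [|k IH] i /=; first lia.
have := IH i.+1; have := h i; case: ltngtP => /=; lia.
Qed.
Lemma sumf_ge g c i k : (forall l, i <= l < i + k -> c <= g l) -> c * k <= sumf g i k.
Proof.
elim: k i => [|k IH] i h /=; first lia.
have := h i; have := IH i.+1 (fun l hl => h l ltac:(lia)); lia.
Qed.

Lemma sumf_split f i k : sumf f i k =
  sumf (fun l => f (i + 2 * l)) 0 (uphalf k) + sumf (fun l => f (i.+1 + 2 * l)) 0 k./2.
Proof.
elim: k i => [|k IH] i //=.
rewrite IH /= addn0 sumf_shift.
rewrite (@sumf_ext (fun l => f (i + 2 * l.+1)) (fun l => f (i.+2 + 2 * l))); last by move=> l; congr f; lia.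
lia.
Qed.

Lemma size_ge a t i k : path adj a t -> sumf (fun c => cr c a t) i k <= size t.
Proof.
elim: t a i k => [|b t IH] a i k /=.
  by rewrite sumf0.
case/andP=> hab hp.
rewrite sumfD.
have h1 : sumf (fun c => ec c a b) i k <= 1.
  case/orP: hab => /eqP E; subst.
    apply: (leq_trans (sumf_le1 (t := a) _ _ _)); last by case: (i <= a).
    by move=> c; rewrite ec_up eq_sym.
  apply: (leq_trans (sumf_le1 (t := b) _ _ _)); last by case: (i <= b).
  by move=> c; rewrite ec_down eq_sym.
have := IH b i k hp; lia.
Qed.

Lemma ed0 a t : path adj a t -> ed a t 0 = cr 0 a t.
Proof.
elim: t a => [|b t IH] a //= /andP[hab hp]; rewrite IH //.
case/orP: hab => /eqP E; subst; rewrite ?ec_up ?ec_down; eqs => //=; lia.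
Qed.

Lemma edS a t k : path adj a t -> ed a t k.+1 = cr k a t + cr k.+1 a t.
Proof.
elim: t a => [|b t IH] a //= /andP[hab hp]; rewrite IH //.
case/orP: hab => /eqP E; subst; rewrite ?ec_up ?ec_down; eqs => //=; lia.
Qed.

Lemma cr_odd c a t : path adj a t -> odd (cr c a t) = ((a <= c) != (last a t <= c)).
Proof.
elim: t a => [|b t IH] a /=; first by case: (a <= c).
case/andP=> hab hp; rewrite oddD IH // ec_le // oddb.
by case: (a <= c); case: (b <= c); case: (last b t <= c).
Qed.

Lemma cr_contig c a t : path adj a t -> has (fun u => u <= c) (a :: t) ->
  has (fun u => c < u) (a :: t) -> 0 < cr c a t.
Proof.
elim: t a => [|b t IH] a /=.
  rewrite !orbF => _ h1 h2; lia.
case/andP=> hab hp h1 h2.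
case E: (ec c a b); first by rewrite /= add1n.
rewrite add0n; apply: IH => //=; rewrite ec_le // in E.
  move: h1 E.
  by case: (a <= c); case: (b <= c).
rewrite ltnNge; move: h2 E; rewrite !ltnNge.
by case: (a <= c); case: (b <= c).
Qed.

Lemma cr_pos_lo c a t : 0 < cr c a t -> has (fun u => u <= c) (a :: t).
Proof.
elim: t a => [|b t IH] a //=.
case E: (ec c a b) => /=.
  move: E; rewrite /= /ec; eqs => //= _; lia.
move=> /IH /= ->; by rewrite orbT.
Qed.

Lemma cr_pos_hi c a t : 0 < cr c a t -> has (fun u => c < u) (a :: t).
Proof.
elim: t a => [|b t IH] a //=.
case E: (ec c a b) => /=.
  move: E; rewrite /= /ec; eqs => //= _; lia.
move=> /IH /= ->; by rewrite orbT.
Qed.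

Lemma chain (g : nat -> nat) (P : nat -> bool) :
  (forall x y z, x <= y -> y <= z -> P x -> P z -> P y) ->
  (forall l, odd (g l) = P l) ->
  forall t j, (forall l, j <= l < j + t -> 0 < g l) ->
  (forall l, j <= l -> l.+2 <= j + t -> g l != g l.+1) ->
  2 * t <= sumf g j t + 1.
Proof.
move=> cvx og; elim/ltn_ind => t IH j pos neq.
case: t IH pos neq => [|[|t]] IH pos neq /=.
- lia.
- have := pos j; lia.
have p0 := pos j; have p1 := pos j.+1.
have n0 := neq j.
case: (ltngtP (g j) 1) => h0.
- lia.
- have := IH t.+1 (ltac:(lia)) j.+1 (fun l hl => pos l ltac:(lia)) (fun l hl1 hl2 => neq l ltac:(lia) ltac:(lia)).
  rewrite /=; lia.
have o0 : P j by rewrite -og h0.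
case o1: (odd (g j.+1)).
  have h1 : 3 <= g j.+1.
    move: (n0 (leqnn _) ltac:(lia)); rewrite h0 => /eqP hne.
    have := p1 ltac:(lia). move: o1. case: (g j.+1) hne => [|[|[|x]]] //=; lia.
  have := IH t (ltac:(lia)) j.+2 (fun l hl => pos l ltac:(lia)) (fun l hl1 hl2 => neq l ltac:(lia) ltac:(lia)).
  lia.
have Pn : ~~ P j.+1 by rewrite -og o1.
have h1 : 2 <= g j.+1.
  move: (n0 (leqnn _) ltac:(lia)); rewrite h0 => /eqP hne.
  have := p1 ltac:(lia); lia.
have hr : 2 * t <= sumf g j.+2 t.
  apply: sumf_ge => l hl.
  have gl := pos l ltac:(lia).
  have Pl : ~~ P l.
    apply/negP => Pl; move/negP: Pn; apply; apply: (cvx j j.+1 l) => //; lia.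
  move: Pl; rewrite -og; case: (g l) gl => [|[|x]] //=.
lia.
Qed.

Lemma bigsumf N F j : \sum_(i < N) F (j + i) = sumf F j N.
Proof.
elim: N j => [|N IH] j; first by rewrite big_ord0.
rewrite big_ord_recl /= addn0 -IH; congr (_ + _).
apply: eq_bigr => i _; by rewrite /bump /= add1n addnS addSn.
Qed.

Lemma sumf_eq t j k : sumf (fun i => (t == i) : nat) j k = ((j <= t) && (t < j + k)).
Proof.
elim: k j => [|k IH] j /=; first by rewrite addn0; case: ltngtP.
rewrite IH addnS -addSn; case: (ltngtP j t) => //=; case: ltngtP => //; lia.
Qed.

Lemma gdeg_path n (v : 'I_n.+1) : gdeg (@path_rel n) v = (0 < v) + (v < n).
Proof.
rewrite /gdeg -sum1_card big_mkcond /=.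
rewrite (eq_bigr (fun i : 'I_n.+1 => ((v.+1 == i) : nat) + ((v : nat) == i.+1))); last first.
  move=> i _; rewrite inE /path_rel; eqs => //=; lia.
rewrite big_split /= (bigsumf _ (fun i => (v.+1 == i) : nat) 0) .
rewrite (bigsumf _ (fun i => ((v : nat) == i.+1) : nat) 0) !sumf_eq.
rewrite -(sumf_shift (fun i => ((v : nat) == i) : nat)) sumf_eq.
have := ltn_ord v; case: (v : nat) => [|w] /=; case: ltngtP => //=; lia.
Qed.

Lemma wed n (x : 'I_n.+1) (s : seq 'I_n.+1) (v : 'I_n.+1) : walk_extra_deg x s v = ed x (map val s) v.
Proof.
elim: s x => [|y s IH] x; first by rewrite /walk_extra_deg big_nil.
rewrite /walk_extra_deg /= big_cons -/(walk_extra_deg y s v) IH.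
by [].
Qed.

Lemma pathv n (x : 'I_n.+1) (s : seq 'I_n.+1) : path (@path_rel n) x s = path adj x (map val s).
Proof. by elim: s x => [|y s IH] x //=; rewrite IH. Qed.

Lemma crn n (x : 'I_n.+1) (s : seq 'I_n.+1) : cr n x (map val s) = 0.
Proof.
case E: (cr n x (map val s)) => [//|k].
have := @cr_pos_hi n x (map val s); rewrite E => /(_ isT) /hasP [u].
rewrite inE => /orP [/eqP ->|/mapP [w _ ->]]; by rewrite ltnNge -ltnS ltn_ord.
Qed.

Lemma crit_fwd n (x : 'I_n.+1) (s : seq 'I_n.+1) : irregularising (@path_rel n) x s ->
  forall i, i + 3 <= n -> cr i x (map val s) <> cr i.+2 x (map val s).
Proof.
move=> [hp hirr] i hi.
have := hirr (inord i.+1) (inord i.+2).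
rewrite /path_rel /plus_walk_deg !gdeg_path !wed !inordK; try lia.
rewrite /is_walk pathv in hp.
rewrite !edS //= eqxx => /(_ isT); lia.
Qed.

Lemma crit_bwd n (x : 'I_n.+1) (s : seq 'I_n.+1) : 2 <= n -> path (@path_rel n) x s ->
  (forall i, i + 3 <= n -> cr i x (map val s) <> cr i.+2 x (map val s)) ->
  irregularising (@path_rel n) x s.
Proof.
move=> hn hp H; split => //.
rewrite pathv in hp.
have aux : forall u v : 'I_n.+1, (u : nat).+1 = v ->
    plus_walk_deg (@path_rel n) x s u <> plus_walk_deg (@path_rel n) x s v.
  move=> u v E; rewrite /plus_walk_deg !gdeg_path !wed -E.
  have hv := ltn_ord v; rewrite -E in hv.
  case Eu: (u : nat) => [|a].
    rewrite ed0 // edS //; lia.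
  rewrite !edS //.
  case: (ltnP a.+2 n) => ha.
    have := H a ltac:(lia); lia.
  have -> : a.+2 = n by lia.
  rewrite crn; lia.
move=> u v; rewrite /path_rel; case/orP => /eqP h.
  exact: aux.
by move=> e; apply: (aux v u h); rewrite e.
Qed.

Lemma lb_nat n a t : path adj a t -> (forall i, i + 3 <= n -> cr i a t <> cr i.+2 a t) ->
  6 <= n -> 2 * n - 10 <= size t.
Proof.
move=> hp H hn.
pose m c := cr c a t.
have pos : forall c, 2 <= c -> c + 3 <= n -> 0 < m c.
  move=> c h1 h2; case E: (m c) => [|//]; exfalso.
  have A : 0 < m (c - 2).
    have := H (c - 2) ltac:(lia); have -> : (c - 2).+2 = c by lia.
    rewrite -/(m c) -/(m (c-2)) E; lia.
  have B : 0 < m c.+2.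
    have := H c ltac:(lia); rewrite -/(m c) -/(m c.+2) E; lia.
  have : 0 < m c.
    apply: cr_contig => //.
      apply: sub_has (cr_pos_lo A) => u /=; lia.
    apply: sub_has (cr_pos_hi B) => u /=; lia.
  by rewrite E.
pose P c := (a <= c) != (last a t <= c).
have og : forall c, odd (m c) = P c by move=> c; exact: cr_odd.
have cvx : forall x y z, x <= y -> y <= z -> P x -> P z -> P y.
  move=> x y z hxy hyz; rewrite /P.
  case: (leqP a x) => ?; case: (leqP a y) => ?; case: (leqP a z) => ?;
  case: (leqP (last a t) x) => ?; case: (leqP (last a t) y) => ?; case: (leqP (last a t) z) => //=; lia.
set k := n - 4.
have hs := size_ge 2 k hp.
rewrite sumf_split in hs.
have c1 := @chain (fun l => m (2 + 2 * l)) (fun l => P (2 + 2 * l))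
  (fun x y z h1 h2 => cvx (2 + 2 * x) (2 + 2 * y) (2 + 2 * z) ltac:(lia) ltac:(lia)) (fun l => og _) (uphalf k) 0.
have c2 := @chain (fun l => m (3 + 2 * l)) (fun l => P (3 + 2 * l))
  (fun x y z h1 h2 => cvx (3 + 2 * x) (3 + 2 * y) (3 + 2 * z) ltac:(lia) ltac:(lia)) (fun l => og _) (k./2) 0.
have e1 : forall l, 2 + 2 * l.+1 = (2 + 2 * l).+2 by move=> l; lia.
have e2 : forall l, 3 + 2 * l.+1 = (3 + 2 * l).+2 by move=> l; lia.
move: c1 c2 hs; rewrite /m -/(m _) uphalfE -!divn2 => c1 c2 hs.
have := c1 (fun l hl => pos (2 + 2 * l) ltac:(lia) ltac:(lia))
  (fun l _ hl => ltac:(rewrite e1; apply/eqP; apply: H; lia)).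
have := c2 (fun l hl => pos (3 + 2 * l) ltac:(lia) ltac:(lia))
  (fun l _ hl => ltac:(rewrite e2; apply/eqP; apply: H; lia)).
lia.
Qed.

Definition Bk v := [:: v.+1; v.+2; v.+3; v.+4; v.+3; v.+2; v.+3; v.+4].
Fixpoint Bs v q := if q is q'.+1 then Bk v ++ Bs v.+4 q' else [::].

Lemma cr_cat c a s1 s2 : cr c a (s1 ++ s2) = cr c a s1 + cr c (last a s1) s2.
Proof. elim: s1 a => [|b s1 IH] a //=; rewrite IH; lia. Qed.

Lemma Bs_last v q : last v (Bs v q) = v + 4 * q.
Proof. elim: q v => [|q IH] v /=; first lia. rewrite ?last_cat IH /=; lia. Qed.

Lemma Bs_size v q : size (Bs v q) = 8 * q.
Proof. elim: q v => [|q IH] v /=; first lia. rewrite ?size_cat IH /=; lia. Qed.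

Lemma Bs_path v q : path adj v (Bs v q).
Proof.
elim: q v => [|q IH] v //=; rewrite IH /adj /= !eqxx /= ?orbT //.
Qed.

Lemma Bs_all v q : all (fun u => u <= v + 4 * q) (Bs v q).
Proof.
elim: q v => [|q IH] v //=.
have h := sub_all _ (IH v.+4); rewrite h; last by move=> u /=; lia.
rewrite andbT; repeat (apply/andP; split); lia.
Qed.

Ltac ifs := repeat match goal with |- context [if ?b then _ else _] => case: ifP => ? end.

Lemma Bs_cr c v q : cr c v (Bs v q) =
  if c < v then 0 else if c < v + 4 * q then (if (c - v) %% 4 < 2 then 1 else 3) else 0.
Proof.
elim: q v => [|q IH] v /=; first by ifs => //; lia.
rewrite IH !ec_up !ec_down.
ifs; eqs => /=; lia.
Qed.

Definition good n a t := [/\ a <= n, all (fun u => u <= n) t, path adj a t,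
  (forall i, i + 3 <= n -> cr i a t <> cr i.+2 a t) & size t = 2 * n - 10].

Ltac prune := try (exfalso; lia).
Ltac ifs2 := repeat match goal with |- context [if ?b then _ else _] => case: ifP => ?; prune end.
Ltac eqs2 := repeat match goal with |- context [?x == ?y :> nat] => case: (x =P y) => ?; prune end.
Ltac fin := move=> i hi; rewrite ?cr_cat ?Bs_last !Bs_cr /= ?ec_up ?ec_down; ifs2; eqs2; rewrite /=; lia.

Lemma all_le N s : all (fun u => u <= N) s -> forall M, N <= M -> all (fun u => u <= M) s.
Proof. move=> h M hM; apply: sub_all h => u /=; lia. Qed.

Lemma case0 q : good (4 * q + 6) 2 (Bs 2 q ++ [:: (2 + 4 * q).+1; (2 + 4 * q).+2]).
Proof.
split.
- lia.
- rewrite all_cat (all_le (Bs_all 2 q)); last lia. rewrite /=; repeat (apply/andP; split); lia.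
- rewrite cat_path Bs_path Bs_last /= /adj !eqxx //.
- fin.
- rewrite size_cat Bs_size /=; lia.
Qed.

Lemma case1 q : good (4 * q + 7) 2 (Bs 2 q ++ [:: (2 + 4 * q).+1; (2 + 4 * q).+2; (2 + 4 * q).+3; (2 + 4 * q).+2]).
Proof.
split.
- lia.
- rewrite all_cat (all_le (Bs_all 2 q)); last lia. rewrite /=; repeat (apply/andP; split); lia.
- rewrite cat_path Bs_path Bs_last /= /adj !eqxx /= ?orbT //.
- fin.
- rewrite size_cat Bs_size /=; lia.
Qed.

Lemma case2 q : good (4 * q + 8) 2 (Bs 2 q ++ [:: (2 + 4 * q).+1; (2 + 4 * q).+2; (2 + 4 * q).+3; (2 + 4 * q).+4; (2 + 4 * q).+3; (2 + 4 * q).+2]).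
Proof.
split.
- lia.
- rewrite all_cat (all_le (Bs_all 2 q)); last lia. rewrite /=; repeat (apply/andP; split); lia.
- rewrite cat_path Bs_path Bs_last /= /adj !eqxx /= ?orbT //.
- fin.
- rewrite size_cat Bs_size /=; lia.
Qed.

Lemma case3 q : good (4 * q + 9) 3 ([:: 2; 3] ++ (Bs 3 q ++ [:: (3 + 4 * q).+1; (3 + 4 * q).+2; (3 + 4 * q).+3; (3 + 4 * q).+4; (3 + 4 * q).+3; (3 + 4 * q).+2])).
Proof.
split.
- lia.
- rewrite /= all_cat (all_le (Bs_all 3 q)); last lia. rewrite /=; repeat (apply/andP; split); lia.
- rewrite /= cat_path Bs_path Bs_last /= /adj !eqxx /= ?orbT //.
- move=> i hi; rewrite /= !cr_cat !Bs_last !Bs_cr /= ?ec_up ?ec_down.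
  ifs2; eqs2; rewrite /=; lia.
- rewrite /= size_cat Bs_size /=; lia.
Qed.

Lemma lift_walk n a t : 2 <= n -> a <= n -> all (fun u => u <= n) t -> path adj a t ->
  (forall i, i + 3 <= n -> cr i a t <> cr i.+2 a t) ->
  exists (x : 'I_n.+1) (s : seq 'I_n.+1), irregularising (@path_rel n) x s /\ walk_length x s = size t.
Proof.
move=> hn ha hall hp H.
have E : map val (map (@inord n) t) = t.
  rewrite -map_comp map_id_in // => u /(allP hall) /= hu; rewrite inordK //; lia.
have Ea : (inord a : 'I_n.+1) = a :> nat by rewrite inordK //; lia.
exists (inord a), (map (@inord n) t); split; last by rewrite /walk_length size_map.
apply: crit_bwd => //; rewrite ?pathv E Ea //.
Qed.

Lemma good_walk n a t : 2 <= n -> good n a t ->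
  exists (x : 'I_n.+1) (s : seq 'I_n.+1), irregularising (@path_rel n) x s /\ walk_length x s = 2 * n - 10.
Proof.
move=> hn; rewrite /good; case=> ha hall hp H hs.
have := lift_walk hn ha hall hp H. by rewrite hs.
Qed.

Theorem theorem5p5 (n : nat) (hn : 2 <= n) :
  MLW_eq (@path_rel n)
    (if n == 2 then 0
     else if n == 3 then 1
     else if (n == 4) || (n == 5) then 2
     else 2 * n - 10).
Proof.
split.
- case: n hn => [|[|[|[|[|[|n]]]]]] hn //=.
  + have := @lift_walk 2 0 [::] isT isT isT isT; rewrite /=; apply => i hi; lia.
  + have := @lift_walk 3 0 [:: 1] isT isT isT isT; rewrite /=; apply.
    by case=> [|[|[|i]]] //= hi; lia.
  + have := @lift_walk 4 0 [:: 1; 2] isT isT isT isT; rewrite /=; apply.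
    by case=> [|[|[|i]]] //= hi; lia.
  + have := @lift_walk 5 1 [:: 2; 3] isT isT isT isT; rewrite /=; apply.
    by case=> [|[|[|i]]] //= hi; lia.
  have [q [r [hr ->]]] : exists q r, r < 4 /\ n = 4 * q + r.
    exists (n %/ 4), (n %% 4); split; lia.
  case: r hr => [|[|[|[|r]]]] hr //.
  + have -> : (4 * q + 0).+4.+2 = 4 * q + 6 by lia.
    apply: good_walk (case0 q); lia.
  + have -> : (4 * q + 1).+4.+2 = 4 * q + 7 by lia.
    apply: good_walk (case1 q); lia.
  + have -> : (4 * q + 2).+4.+2 = 4 * q + 8 by lia.
    apply: good_walk (case2 q); lia.
  + have -> : (4 * q + 3).+4.+2 = 4 * q + 9 by lia.
    apply: good_walk (case3 q); lia.
- move=> x s hirr.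
  have H := crit_fwd hirr.
  have hp : path adj x (map val s) by case: hirr => hp _; rewrite -pathv.
  rewrite /walk_length -(size_map val s).
  case: n hn x s hirr H hp => [|[|[|[|[|[|n]]]]]] hn //= x s hirr H hp.
  + have := size_ge 0 3 hp; have := H 0 isT; rewrite /=; lia.
  + have := size_ge 0 4 hp; have := H 0 isT; have := H 1 isT; rewrite /=; lia.
  + have := size_ge 0 4 hp; have := H 0 isT; have := H 1 isT; rewrite /=; lia.
  + exact: lb_nat hp H _.
Qed.
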